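(* Let $q\equiv 3 \pmod 4$ be a prime power and let $P=\{(x,y,z)\in\mathbb{F}_q^3 : z=x^2+y^2\}$. There are absolute constants $C,c>0$ such that for every set $X\subset P$ with $|X|\ge C q^{5/3}$ we have \[\mathcal{E}_{\mathtt{nt}}^+(X)\ge c\,\frac{|X|^4}{q^3}.\]
   Context: For $X\subset P$, $\mathcal{E}_{\mathtt{nt}}^+(X)$ denotes the number of non-trivial energy tuples in $X$, i.e. the number of tuples $(a,b,c,d)\in X^4$ with $a+b=c+d$ and $a,b,c,d$ pairwise distinct. The paper writes $|X|\gg q^{5/3}$ and $\gg$ for inequalities up to absolute positive constants. *)

(* Defs.v *)
From mathcomp Require Import all_boot all_order all_algebra all_field.
From Stdlib Require Import Reals.
Set Implicit Arguments. Unset Strict Implicit. Unset Printing Implicit Defensive.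
Import GRing.Theory.

Section Defs.
Variable F : finFieldType.
Local Open Scope ring_scope.

(* points of F_q^3, written ((x, y), z) *)
Definition pt := (F * F * F)%type.

Definition add3 (a b : pt) : pt :=
  ((a.1.1 + b.1.1, a.1.2 + b.1.2), a.2 + b.2).

Definition paraboloid : {set pt} :=
  [set p : pt | p.2 == p.1.1 ^+ 2 + p.1.2 ^+ 2].

Definition energy_nt (X : {set pt}) : nat :=
  #|[set t : pt * pt * pt * pt |
      let: (a, b, c, d) := t in
      [&& a \in X, b \in X, c \in X, d \in X,
          add3 a b == add3 c d,
          a != b, a != c, a != d, b != c, b != d & c != d]]|.
End Defs.

(* Main.v *)
Require Import Defs.
From mathcomp Require Import all_boot all_order all_algebra all_field.
From Stdlib Require Import Reals.
From mathcomp Require Import zify.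
From Stdlib Require Import Lra.
From mathcomp Require Import ssrnat.
Set Implicit Arguments. Unset Strict Implicit. Unset Printing Implicit Defensive.
Import GRing.Theory.

Lemma cs_nat (I : finType) (f : I -> nat) :
  (\sum_i f i) ^ 2 <= #|I| * \sum_i f i ^ 2.
Proof.
have H : \sum_i \sum_j (2 * (f i * f j)) <= \sum_i \sum_j (f i ^ 2 + f j ^ 2).
  by apply: leq_sum => i _; apply: leq_sum => j _; exact: nat_Cauchy.
have E1 : \sum_i \sum_j (2 * (f i * f j)) = 2 * (\sum_i f i) ^ 2.
  rewrite expnS expn1 big_distrl /= big_distrr /=.
  apply: eq_bigr => i _; rewrite big_distrr /= big_distrr /=.
  by apply: eq_bigr => j _.
have E2 : \sum_i \sum_j (f i ^ 2 + f j ^ 2) = 2 * (#|I| * \sum_i f i ^ 2).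
  under eq_bigr do rewrite big_split /= sum_nat_const.
  rewrite big_split /= sum_nat_const.
  idtac.
  rewrite -big_distrr /=. by rewrite mul2n -addnn.
rewrite E1 E2 in H; by rewrite leq_pmul2l // in H.
Qed.

Section Comb.
Variable F : finFieldType.
Local Open Scope ring_scope.

Lemma add3C (a b : pt F) : add3 a b = add3 b a.
Proof. by case: a b => [[a1 a2] a3] [[b1 b2] b3]; rewrite /add3 /= (addrC a1) (addrC a2) (addrC a3). Qed.

Lemma add3K (a b c : pt F) : add3 a b = add3 a c -> b = c.
Proof.
by case: a b c => [[? ?] ?] [[? ?] ?] [[? ?] ?]; rewrite /add3 /= => [[/addrI -> /addrI -> /addrI ->]].
Qed.

Lemma add3Kr (a b c : pt F) : add3 b a = add3 c a -> b = c.
Proof. by rewrite ![add3 _ a]add3C; apply: add3K. Qed.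

Local Close Scope ring_scope.

Lemma sum_eq1 (T : finType) (b : bool) (v : T) :
  \sum_s (b && (v == s) : nat) = b.
Proof.
rewrite (bigD1 v) //= eqxx andbT big1 ?addn0 // => s /negbTE.
by rewrite eq_sym => ->; rewrite andbF.
Qed.

Lemma sum_eq2 (T : finType) (b1 b2 : bool) (v1 v2 : T) :
  \sum_s ((b1 && (v1 == s) : nat) * (b2 && (v2 == s) : nat)) = b1 && b2 && (v1 == v2).
Proof.
rewrite (bigD1 v1) //= eqxx andbT big1 ?addn0.
  by rewrite (eq_sym v2 v1); case: b1; case: b2; case: (v1 == v2).
by move=> s /negbTE; rewrite eq_sym => ->; rewrite andbF.
Qed.

Lemma sum_ind (T : finType) (A : {pred T}) (P : pred T) :
  (forall x, P x = (x \in A)) -> \sum_x (P x : nat) = #|A|.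
Proof.
move=> H; rewrite -sum1_card [RHS]big_mkcond; apply: eq_bigr => x _.
by rewrite H; case: (x \in A).
Qed.

Variable X : {set pt F}.
Definition sum2 (p : pt F * pt F) := add3 p.1 p.2.
Definition Xp := setX X X.
Definition r (s : pt F) := \sum_(p : pt F * pt F) ((p \in Xp) && (sum2 p == s) : nat).
Definition S := [set u : (pt F * pt F) * (pt F * pt F) |
   [&& u.1 \in Xp, u.2 \in Xp & sum2 u.1 == sum2 u.2]].

Lemma sum_r : \sum_s r s = #|X| ^ 2.
Proof.
rewrite /r exchange_big /=.
under eq_bigr do rewrite sum_eq1.
rewrite -mulnn -cardsX -sum1_card [RHS]big_mkcond; apply: eq_bigr => i _; by case: (i \in _).
Qed.

Lemma sum_r2 : \sum_s r s ^ 2 = #|S|.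
Proof.
under eq_bigr do rewrite /r -mulnn big_distrl /=.
under eq_bigr do under eq_bigr do rewrite big_distrr /=.
rewrite exchange_big /=.
under eq_bigr do rewrite exchange_big /=.
under eq_bigr do under eq_bigr do rewrite sum_eq2.
rewrite pair_bigA /=; apply: (sum_ind (fun u => _)) => u.
by rewrite !inE !andbA.
Qed.

Lemma inS u : (u \in S) = [&& u.1 \in Xp, u.2 \in Xp & sum2 u.1 == sum2 u.2].
Proof. by rewrite /S in_set. Qed.

Lemma card_deg (D : {set (pt F * pt F) * (pt F * pt F)}) (g : _ -> pt F * pt F) :
  {in D &, injective g} -> (forall u, u \in D -> g u \in Xp) -> #|D| <= #|X| ^ 2.
Proof.
move=> inj sub; rewrite -(card_in_imset inj) -mulnn -cardsX.
apply: subset_leq_card; apply/subsetP => y /imsetP [u uD ->]; exact: sub.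
Qed.

Definition Dg (P : pt F -> pt F -> pt F -> pt F -> bool) :=
  [set u in S | P u.1.1 u.1.2 u.2.1 u.2.2].

Lemma inDg P u : (u \in Dg P) = (u \in S) && P u.1.1 u.1.2 u.2.1 u.2.2.
Proof. by rewrite /Dg in_set. Qed.

Lemma XpP (p : pt F * pt F) : (p \in Xp) = (p.1 \in X) && (p.2 \in X).
Proof. by case: p => ? ?; rewrite /Xp in_setX. Qed.

Ltac deg_start :=
  move=> [[a b] [c d]] [[a' b'] [c' d']]; rewrite !inDg !inS /sum2 /=
  => /andP[/and3P[H1 H2 /eqP e] /eqP h] /andP[/and3P[H1' H2' /eqP e'] /eqP h'] [].

Lemma D1 : #|Dg (fun a b c d => a == b)| <= #|X| ^ 2.
Proof.
apply: (card_deg (g := fun u => (u.1.1, u.2.1))); [ | move=> [[a b] [c d]]; rewrite inDg inS !XpP /=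
  => /andP[/and3P[/andP[Ha Hb] /andP[Hc Hd] _] _]; by rewrite ?XpP /= ?Ha ?Hb ?Hc ?Hd].
deg_start; move=> ? ?; subst;
  first [ rewrite (add3K (etrans (esym e) e')) | rewrite (add3Kr (etrans (esym e) e'))
        | rewrite (add3K (etrans e (esym e'))) | rewrite (add3Kr (etrans e (esym e'))) ]; by [].
Qed.

Lemma D2 : #|Dg (fun a b c d => a == c)| <= #|X| ^ 2.
Proof.
apply: (card_deg (g := fun u => u.1)); [ | move=> [[a b] [c d]]; rewrite inDg inS !XpP /=
  => /andP[/and3P[/andP[Ha Hb] /andP[Hc Hd] _] _]; by rewrite ?XpP /= ?Ha ?Hb ?Hc ?Hd].
deg_start; move=> ? ?; subst;
  first [ rewrite (add3K (etrans (esym e) e')) | rewrite (add3Kr (etrans (esym e) e'))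
        | rewrite (add3K (etrans e (esym e'))) | rewrite (add3Kr (etrans e (esym e'))) ]; by [].
Qed.

Lemma D3 : #|Dg (fun a b c d => a == d)| <= #|X| ^ 2.
Proof.
apply: (card_deg (g := fun u => u.1)); [ | move=> [[a b] [c d]]; rewrite inDg inS !XpP /=
  => /andP[/and3P[/andP[Ha Hb] /andP[Hc Hd] _] _]; by rewrite ?XpP /= ?Ha ?Hb ?Hc ?Hd].
deg_start; move=> ? ?; subst;
  first [ rewrite (add3K (etrans (esym e) e')) | rewrite (add3Kr (etrans (esym e) e'))
        | rewrite (add3K (etrans e (esym e'))) | rewrite (add3Kr (etrans e (esym e'))) ]; by [].
Qed.

Lemma D4 : #|Dg (fun a b c d => b == c)| <= #|X| ^ 2.
Proof.
apply: (card_deg (g := fun u => u.1)); [ | move=> [[a b] [c d]]; rewrite inDg inS !XpP /=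
  => /andP[/and3P[/andP[Ha Hb] /andP[Hc Hd] _] _]; by rewrite ?XpP /= ?Ha ?Hb ?Hc ?Hd].
deg_start; move=> ? ?; subst;
  first [ rewrite (add3K (etrans (esym e) e')) | rewrite (add3Kr (etrans (esym e) e'))
        | rewrite (add3K (etrans e (esym e'))) | rewrite (add3Kr (etrans e (esym e'))) ]; by [].
Qed.

Lemma D5 : #|Dg (fun a b c d => b == d)| <= #|X| ^ 2.
Proof.
apply: (card_deg (g := fun u => u.1)); [ | move=> [[a b] [c d]]; rewrite inDg inS !XpP /=
  => /andP[/and3P[/andP[Ha Hb] /andP[Hc Hd] _] _]; by rewrite ?XpP /= ?Ha ?Hb ?Hc ?Hd].
deg_start; move=> ? ?; subst;
  first [ rewrite (add3K (etrans (esym e) e')) | rewrite (add3Kr (etrans (esym e) e'))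
        | rewrite (add3K (etrans e (esym e'))) | rewrite (add3Kr (etrans e (esym e'))) ]; by [].
Qed.

Lemma D6 : #|Dg (fun a b c d => c == d)| <= #|X| ^ 2.
Proof.
apply: (card_deg (g := fun u => (u.1.1, u.2.1))); [ | move=> [[a b] [c d]]; rewrite inDg inS !XpP /=
  => /andP[/and3P[/andP[Ha Hb] /andP[Hc Hd] _] _]; by rewrite ?XpP /= ?Ha ?Hb ?Hc ?Hd].
deg_start; move=> ? ?; subst;
  first [ rewrite (add3K (etrans (esym e) e')) | rewrite (add3Kr (etrans (esym e) e'))
        | rewrite (add3K (etrans e (esym e'))) | rewrite (add3Kr (etrans e (esym e'))) ]; by [].
Qed.


Definition hh (t : pt F * pt F * pt F * pt F) : (pt F * pt F) * (pt F * pt F) :=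
  ((t.1.1.1, t.1.1.2), (t.1.2, t.2)).

Lemma hh_inj : injective hh.
Proof. by move=> [[[a b] c] d] [[[a' b'] c'] d'] [-> -> -> ->]. Qed.

Lemma cardU_le (T : finType) (A B : {set T}) : #|A :|: B| <= #|A| + #|B|.
Proof. exact: (leq_card_setU A B).1. Qed.

Lemma cardU_le2 (T : finType) (A B : {set T}) n m :
  #|A| <= n -> #|B| <= m -> #|A :|: B| <= n + m.
Proof. move=> h1 h2; apply: (leq_trans (cardU_le A B)); exact: leq_add. Qed.

Lemma S_bound : #|S| <= energy_nt X + 6 * #|X| ^ 2.
Proof.
rewrite /energy_nt; set NT := [set t | _].
have sub : S \subset hh @: NT :|: Dg (fun a b c d => a == b) :|: Dg (fun a b c d => a == c)
   :|: Dg (fun a b c d => a == d) :|: Dg (fun a b c d => b == c)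
   :|: Dg (fun a b c d => b == d) :|: Dg (fun a b c d => c == d).
  apply/subsetP => -[[a b] [c d]] uS.
  have uS' := uS; rewrite inS !XpP /= in uS'.
  case/and3P: uS' => /andP[aX bX] /andP[cX dX] /eqP e.
  rewrite /sum2 /= in e.
  rewrite !in_setU !inDg uS /=.
  case: (boolP (a == b)) => [_|nab]; first by rewrite !(orbT, orTb).
  case: (boolP (a == c)) => [_|nac]; first by rewrite !(orbT, orTb).
  case: (boolP (a == d)) => [_|nad]; first by rewrite !(orbT, orTb).
  case: (boolP (b == c)) => [_|nbc]; first by rewrite !(orbT, orTb).
  case: (boolP (b == d)) => [_|nbd]; first by rewrite !(orbT, orTb).
  case: (boolP (c == d)) => [_|ncd]; first by rewrite !(orbT, orTb).
  rewrite !orbF; apply/imsetP; exists (((a, b), c), d) => //.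
  by rewrite /NT inE /= aX bX cX dX e eqxx nab nac nad nbc nbd ncd.
apply: (leq_trans (subset_leq_card sub)).
apply: (leq_trans (cardU_le2 (cardU_le2 (cardU_le2 (cardU_le2 (cardU_le2
   (cardU_le2 (leqnn _) D1) D2) D3) D4) D5) D6)).
rewrite (card_imset _ hh_inj). lia.
Qed.

Lemma main_nat : #|X| ^ 4 <= #|F| ^ 3 * (energy_nt X + 6 * #|X| ^ 2).
Proof.
have := cs_nat r; rewrite sum_r sum_r2 card_prod card_prod => H.
have E : #|X| ^ 4 = (#|X| ^ 2) ^ 2 by rewrite -expnM.
rewrite E; apply: (leq_trans H).
rewrite (_ : #|F| * #|F| * #|F| = #|F| ^ 3); last by rewrite !expnS expn0 muln1 mulnA.
by rewrite leq_mul2l S_bound orbT.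
Qed.
End Comb.

From Stdlib Require Import Reals.

Theorem theorem1p2 :
  exists C c : R, (0 < C)%R /\ (0 < c)%R /\
  forall (F : finFieldType), #|F| %% 4 = 3 ->
  forall X : {set pt F}, X \subset paraboloid F ->
  (C * Rpower (INR #|F|) (5 / 3) <= INR #|X|)%R ->
  (c * (INR #|X| ^ 4) / (INR #|F| ^ 3) <= INR (energy_nt X))%R.
Proof.
exists 4%R, (1/2)%R; split; [lra | split; [lra | ]].
move=> F hq X _ hX.
have hn := main_nat X.
have hn' : (#|X| * #|X| * #|X| * #|X| <= #|F| * #|F| * #|F| *
              (energy_nt X + 6 * (#|X| * #|X|)))%N.
  move: hn; rewrite !expnS expn0 !muln1 !mulnA //.
have q1 : (1 <= #|F|)%N by lia.
move: hn' q1 hX.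
set n := #|X|; set q := #|F|; set E := energy_nt X.
move=> /leP hn' /leP q1 hX.
rewrite !mulnE !addnE in hn'.
apply le_INR in hn'; apply le_INR in q1.
rewrite !mult_INR !plus_INR in hn'.
rewrite !mult_INR (_ : INR 0 = 0%R) in hn' => //.
rewrite (_ : INR 1 = 1%R) in q1; last by [].
set N := INR n in hn' hX *; set Q := INR q in hn' q1 hX *; set EE := INR E in hn' *.
set P := Rpower Q (5 / 3) in hX.
have P0 : (0 < P)%R by rewrite /P /Rpower; apply: exp_pos.
have PP : (Q * Q * Q <= P * P)%R.
  rewrite /P -Rpower_plus (_ : (Q * Q * Q = Q ^ 3)%R); last by simpl; ring.
  rewrite -Rpower_pow; last lra.
  apply: Rle_Rpower => //; simpl; lra.
have E0 : (0 <= EE)%R by apply: pos_INR.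
have h1 : (16 * (P * P) <= N * N)%R by nra.
have h2 : (16 * (Q * Q * Q) * (N * N) <= N * N * (N * N))%R by nra.
have key : (N * N * N * N <= 2 * (Q * Q * Q) * EE)%R by nra.
have Q3 : (0 < Q ^ 3)%R by apply: pow_lt; lra.
apply: (Rmult_le_reg_r (Q ^ 3)) => //.
rewrite /Rdiv Rmult_assoc Rinv_l; last lra.
simpl; nra.
Qed.
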